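(* (a) At an equilibrium point $D$, $\min_{S\in\mathcal C}C_S=C_{\{s_0\}}=1$. (b) A vector $D\in\mathbb R^E_{\ge0}$ is an equilibrium point if and only if $D=|Q|$ for some $s_0$-$s_1$ flow $Q$ of value $1$ with the following property: orienting every edge in the direction of $Q$ and deleting the edges with $Q_e=0$, all directed $s_0$-$s_1$ paths in the resulting directed graph have the same length. In particular, if no two distinct $s_0$-$s_1$ paths in $G$ have the same length, the equilibria are precisely the vectors that equal $1$ on the edges of a simple $s_0$-$s_1$ path and $0$ elsewhere.
   Context: Let $G=(N,E)$ be a finite connected undirected graph with two distinct vertices $s_0$ (source) and $s_1$ (sink). Each edge $e$ has a fixed length $L_e>0$ and a diameter $D_e\ge 0$; edges with $D_e=0$ are treated as absent (conductance $D_e/L_e=0$). Given $D$, the potentials $p_v$ solve $\sum_{u\in\delta(v)}(p_v-p_u)D_{uv}/L_{uv}=b_v$ with $b_{s_0}=1$, $b_{s_1}=-1$, $b_v=0$ otherwise ($\delta(v)$ the neighbours of $v$), and $Q_e=D_e(p_u-p_v)/L_e$ for $e=\{u,v\}$ with a fixed orientation $(u,v)$ (the electrical $s_0$-$s_1$ flow of value 1). $D$ is an equilibrium point of the dynamics $\dot D_e=|Q_e|-D_e$ if $D_e=|Q_e|$ for all $e$. For $S\subseteq N$, $\delta(S)$ is the set of edges with exactly one endpoint in $S$; $\mathcal C$ is the set of $S\subseteq N$ with $s_0\in S$, $s_1\notin S$; $C_S=\sum_{e\in\delta(S)}D_e$. The length of a path is the sum of $L_e$ over its edges.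
   Formalization: In (b), the flow Q of value 1 is also acyclic, so orienting every edge in the direction of Q and deleting the edges with $Q_e=0$ leaves a directed graph without directed cycles. The statement above fails without it. *)

(* Defs.v *)
From HB Require Import structures.
From mathcomp Require Import all_boot all_order all_algebra.
Set Implicit Arguments. Unset Strict Implicit. Unset Printing Implicit Defensive.
Import Order.TTheory GRing.Theory Num.Theory.
Local Open Scope ring_scope.

Section Physarum.
Variables (R : realFieldType) (N E : finType) (src tgt : E -> N).
Variables (L : E -> R) (s0 s1 : N).

Definition links (e : E) (x y : N) : bool :=
  ((src e == x) && (tgt e == y)) || ((src e == y) && (tgt e == x)).

Definition adj : rel N := fun x y => [exists e, links e x y].
Definition connected_graph : Prop := forall x y : N, connect adj x y.

Definition bvec (v : N) : R :=
  if v == s0 then 1 else if v == s1 then -1 else 0.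

Definition potential_eqs (D : E -> R) (p : N -> R) : Prop :=
  forall v : N,
    \sum_(e | src e == v) (p v - p (tgt e)) * (D e / L e)
  + \sum_(e | tgt e == v) (p v - p (src e)) * (D e / L e) = bvec v.

Definition elec_flow (D : E -> R) (p : N -> R) (e : E) : R :=
  D e * (p (src e) - p (tgt e)) / L e.

(* equilibrium point of dD/dt = |Q| - D *)
Definition equilibrium (D : E -> R) : Prop :=
  exists p : N -> R, potential_eqs D p /\ forall e, D e = `|elec_flow D p e|.

Definition cut (D : E -> R) (S : {set N}) : R :=
  \sum_(e | (src e \in S) != (tgt e \in S)) D e.

Definition st_flow (Q : E -> R) : Prop :=
  forall v : N,
    \sum_(e | src e == v) Q e - \sum_(e | tgt e == v) Q e = bvec v.

Definition plen (es : seq E) : R := \sum_(e <- es) L e.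

Fixpoint uwalk (x : N) (vs : seq N) (es : seq E) : bool :=
  match vs, es with
  | [::], [::] => true
  | v :: vs', e :: es' => links e x v && uwalk v vs' es'
  | _, _ => false
  end.

Definition upath (vs : seq N) (es : seq E) : bool :=
  [&& uwalk s0 vs es, last s0 vs == s1 & uniq (s0 :: vs)].

Definition dlink (Q : E -> R) (e : E) (x y : N) : bool :=
  (Q e != 0) &&
  (if 0 < Q e then (src e == x) && (tgt e == y)
   else (tgt e == x) && (src e == y)).

Fixpoint dwalk (Q : E -> R) (x : N) (vs : seq N) (es : seq E) : bool :=
  match vs, es with
  | [::], [::] => true
  | v :: vs', e :: es' => dlink Q e x v && dwalk Q v vs' es'
  | _, _ => false
  end.

Definition dpath (Q : E -> R) (vs : seq N) (es : seq E) : bool :=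
  [&& dwalk Q s0 vs es, last s0 vs == s1 & uniq (s0 :: vs)].

Definition acyclic_flow (Q : E -> R) : Prop :=
  forall x vs es, dwalk Q x vs es -> last x vs = x -> es = [::].

End Physarum.

(* Main.v *)
Require Import Defs.
From HB Require Import structures.
From mathcomp Require Import all_boot all_order all_algebra.
From mathcomp Require Import ring lra zify.
From Stdlib Require Import ClassicalEpsilon.
Import Order.TTheory GRing.Theory Num.Theory.
Set Implicit Arguments. Unset Strict Implicit. Unset Printing Implicit Defensive.
Local Open Scope ring_scope.

Section Walks.
Variables (R : realFieldType) (N E : finType) (src tgt : E -> N).
Variable Q : E -> R.
Local Notation dlk := (dlink src tgt Q).
Local Notation dwk := (dwalk src tgt Q).

Lemma dwalk_size x vs es : dwk x vs es -> size vs = size es.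
Proof. by elim: vs x es => [|v vs IH] x [|e es] //= /andP[_ /IH ->]. Qed.

Lemma dwalk_cat x vs1 es1 vs2 es2 : size vs1 = size es1 ->
  dwk x (vs1 ++ vs2) (es1 ++ es2) = dwk x vs1 es1 && dwk (last x vs1) vs2 es2.
Proof.
elim: vs1 x es1 => [|v vs IH] x [|e es] //= [Hs].
by rewrite IH // andbA.
Qed.

Lemma dwalk_mem x vs es y : dwk x vs es -> y \in vs ->
  exists vs1 es1, [/\ dwk x vs1 es1, last x vs1 = y & es1 != [::]].
Proof.
elim: vs x es => [|v vs IH] x [|e es] //= /andP[Hl Hw].
rewrite in_cons => /orP[/eqP->|Hy].
  by exists [:: v], [:: e]; rewrite /= Hl.
have [vs1 [es1 [H1 H2 H3]]] := IH _ _ Hw Hy.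
by exists (v :: vs1), (e :: es1); rewrite /= Hl H1.
Qed.

Lemma dwalk_uniq x vs es : acyclic_flow src tgt Q -> dwk x vs es -> uniq (x :: vs).
Proof.
move=> Hac; elim: vs x es => [|v vs IH] x [|e es] //= /andP[Hl Hw].
have := IH _ _ Hw; rewrite /= => ->; rewrite andbT.
apply/negP => Hx.
have Hw' : dwk x (v :: vs) (e :: es) by rewrite /= Hl Hw.
have [vs1 [es1 [H1 H2 H3]]] := dwalk_mem Hw' Hx.
by move: H3; rewrite (Hac _ _ _ H1 H2).
Qed.

Lemma dlink_links e x y : dlk e x y -> links src tgt e x y.
Proof.
rewrite /dlink /links => /andP[_]; case: ifP => _ /andP[-> ->] //.
by rewrite orbT.
Qed.

Lemma dwalk_uwalk x vs es : dwk x vs es -> uwalk src tgt x vs es.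
Proof.
elim: vs x es => [|v vs IH] x [|e es] //= /andP[Hl Hw].
by rewrite (dlink_links Hl) (IH _ _ Hw).
Qed.

Lemma dwalk_in x vs es e : dwk x vs es -> e \in es -> exists a b, dlk e a b.
Proof.
elim: vs x es => [|v vs IH] x [|f es] //= /andP[Hl Hw].
rewrite in_cons => /orP[/eqP->|He]; first by exists x, v.
exact: IH Hw He.
Qed.

Lemma dwalk_uniq_size x vs es : acyclic_flow src tgt Q -> dwk x vs es ->
  (size vs < #|N|)%N.
Proof.
move=> Hac Hw; have Hu := dwalk_uniq Hac Hw.
have := max_card (mem (x :: vs)); rewrite (card_uniqP Hu) /=. lia.
Qed.

End Walks.

Section Flows.
Variables (R : realFieldType) (N E : finType) (src tgt : E -> N).
Variable Q : E -> R.
Variables s0 s1 : N.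
Hypothesis Hs : s0 != s1.
Hypothesis Hflow : st_flow src tgt s0 s1 Q.
Local Notation dlk := (dlink src tgt Q).
Local Notation dwk := (dwalk src tgt Q).

Lemma noout_src z e : ~~ [exists e, exists u, dlk e z u] -> src e == z -> Q e <= 0.
Proof.
move=> Hno Hz; rewrite leNgt; apply/negP => HQ; case/negP: Hno.
apply/existsP; exists e; apply/existsP; exists (tgt e).
by rewrite /dlink HQ gt_eqF //= Hz eqxx.
Qed.

Lemma noout_tgt z e : ~~ [exists e, exists u, dlk e z u] -> tgt e == z -> 0 <= Q e.
Proof.
move=> Hno Hz; rewrite leNgt; apply/negP => HQ; case/negP: Hno.
apply/existsP; exists e; apply/existsP; exists (src e).
by rewrite /dlink lt_eqF //= ltNge (ltW HQ) /= Hz eqxx.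
Qed.

Lemma noin_src z e : ~~ [exists e, exists w, dlk e w z] -> src e == z -> 0 <= Q e.
Proof.
move=> Hno Hz; rewrite leNgt; apply/negP => HQ; case/negP: Hno.
apply/existsP; exists e; apply/existsP; exists (tgt e).
by rewrite /dlink lt_eqF //= ltNge (ltW HQ) /= Hz eqxx.
Qed.

Lemma noin_tgt z e : ~~ [exists e, exists w, dlk e w z] -> tgt e == z -> Q e <= 0.
Proof.
move=> Hno Hz; rewrite leNgt; apply/negP => HQ; case/negP: Hno.
apply/existsP; exists e; apply/existsP; exists (src e).
by rewrite /dlink HQ gt_eqF //= Hz eqxx.
Qed.

Lemma bvec_neg z : bvec R s0 s1 z < 0 -> z = s1.
Proof.
rewrite /bvec; case: eqP => _; first by rewrite ltr10.
by case: eqP => // _; rewrite ltxx.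
Qed.

Lemma bvec_pos z : 0 < bvec R s0 s1 z -> z = s0.
Proof.
rewrite /bvec; case: eqP => // _.
by case: eqP => _; rewrite ?ltxx // ltr0N1.
Qed.

Lemma sink z e w : dlk e w z -> ~~ [exists e, exists u, dlk e z u] -> z = s1.
Proof.
move=> He Hno; apply: bvec_neg; rewrite -(Hflow z).
have H1 : \sum_(f | src f == z) Q f <= 0 by apply: sumr_le0 => f; apply: (noout_src Hno).
have H2 : 0 <= \sum_(f | tgt f == z) Q f by apply: sumr_ge0 => f; apply: (noout_tgt Hno).
move: He; rewrite /dlink => /andP[HQ0]; case: ifP => HQ /andP[/eqP Hx /eqP Hy].
  rewrite [X in _ - X](bigD1 e) /=; last by rewrite Hy.
  have : 0 <= \sum_(f | (tgt f == z) && (f != e)) Q f.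
    by apply: sumr_ge0 => f /andP[Hf _]; apply: (noout_tgt Hno).
  move=> H3; lra.
rewrite [X in X - _](bigD1 e) /=; last by rewrite Hy.
have : \sum_(f | (src f == z) && (f != e)) Q f <= 0.
  by apply: sumr_le0 => f /andP[Hf _]; apply: (noout_src Hno).
have : Q e < 0 by rewrite lt_neqAle HQ0 leNgt HQ.
move=> H3 H4; lra.
Qed.

Lemma source z e u : dlk e z u -> ~~ [exists e, exists w, dlk e w z] -> z = s0.
Proof.
move=> He Hno; apply: bvec_pos; rewrite -(Hflow z).
have H1 : 0 <= \sum_(f | src f == z) Q f by apply: sumr_ge0 => f; apply: (noin_src Hno).
have H2 : \sum_(f | tgt f == z) Q f <= 0 by apply: sumr_le0 => f; apply: (noin_tgt Hno).
move: He; rewrite /dlink => /andP[HQ0]; case: ifP => HQ /andP[/eqP Hx /eqP Hy].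
  rewrite [X in X - _](bigD1 e) /=; last by rewrite Hx.
  have : 0 <= \sum_(f | (src f == z) && (f != e)) Q f.
    by apply: sumr_ge0 => f /andP[Hf _]; apply: (noin_src Hno).
  move=> H3; lra.
rewrite [X in _ - X](bigD1 e) /=; last by rewrite Hx.
have : \sum_(f | (tgt f == z) && (f != e)) Q f <= 0.
  by apply: sumr_le0 => f /andP[Hf _]; apply: (noin_tgt Hno).
have : Q e < 0 by rewrite lt_neqAle HQ0 leNgt HQ.
move=> H3 H4; lra.
Qed.

Lemma source_out : exists e u, dlk e s0 u.
Proof.
case: (boolP [exists e, exists u, dlk e s0 u]) => [/existsP[e /existsP[u H]]|Hno].
  by exists e, u.
have := Hflow s0; rewrite /bvec eqxx.
have H1 : \sum_(f | src f == s0) Q f <= 0 by apply: sumr_le0 => f; apply: (noout_src Hno).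
have H2 : 0 <= \sum_(f | tgt f == s0) Q f by apply: sumr_ge0 => f; apply: (noout_tgt Hno).
lra.
Qed.

Hypothesis Hac : acyclic_flow src tgt Q.

Lemma fwd n : forall z e w vs es, dwk w vs es -> dlk e (last w vs) z ->
  (#|N| <= size vs + n)%N -> exists vs' es', dwk z vs' es' /\ last z vs' = s1.
Proof.
have ext : forall z e w vs es, dwk w vs es -> dlk e (last w vs) z ->
    dwk w (rcons vs z) (rcons es e).
  move=> z e w vs es Hw He; rewrite -!cats1 dwalk_cat ?Hw /= ?He //.
  exact: dwalk_size Hw.
elim: n => [|n IH] z e w vs es Hw He Hn.
  have := dwalk_uniq_size Hac (ext _ _ _ _ _ Hw He).
  rewrite size_rcons; lia.
case: (boolP [exists e', exists u, dlk e' z u]) => [/existsP[e' /existsP[u Hu]]|Hno].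
  have [|||vs' [es' [H1 H2]]] := IH u e' w (rcons vs z) (rcons es e).
  - exact: ext.
  - by rewrite last_rcons.
  - rewrite size_rcons; lia.
  by exists (u :: vs'), (e' :: es'); rewrite /= Hu H1.
by exists [::], [::]; split => //=; apply: sink He Hno.
Qed.

Lemma back x n : forall z vs es, dwk z vs es -> last z vs = x ->
  (exists e u, dlk e z u) -> (#|N| <= size vs + n)%N ->
  exists vs' es', dwk s0 vs' es' /\ last s0 vs' = x.
Proof.
elim: n => [|n IH] z vs es Hw Hl [e [u He]] Hn.
  have := dwalk_uniq_size Hac Hw; lia.
case: (boolP [exists e', exists w, dlk e' w z]) => [/existsP[e' /existsP[w Hw']]|Hno].
  apply: (IH w (z :: vs) (e' :: es)) => //=.
  - by rewrite Hw' Hw.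
  - by exists e', z.
  - by rewrite addSnnS.
by exists vs, es; rewrite -(source He Hno).
Qed.

Lemma thru e x y : dlk e x y -> exists vs0 es0 vs1 es1,
  [/\ dwk s0 vs0 es0, last s0 vs0 = x, dwk y vs1 es1 & last y vs1 = s1].
Proof.
move=> He.
have [vs1 [es1 [H1 H2]]] := @fwd #|N| y e x [::] [::] isT He (leqnn _).
have [vs0 [es0 [H3 H4]]] := @back x #|N| x [::] [::] isT erefl
  (ex_intro _ e (ex_intro _ y He)) (leqnn _).
by exists vs0, es0, vs1, es1.
Qed.

Lemma walk_dpath vs es : dwk s0 vs es -> last s0 vs = s1 -> dpath src tgt s0 s1 Q vs es.
Proof.
move=> Hw Hl; rewrite /dpath Hw Hl eqxx /=; exact: dwalk_uniq Hac Hw.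
Qed.

Lemma thru_dpath e x y : dlk e x y -> exists vs0 es0 vs1 es1,
  [/\ dwk s0 vs0 es0, last s0 vs0 = x, dwk y vs1 es1, last y vs1 = s1 &
      dpath src tgt s0 s1 Q (vs0 ++ y :: vs1) (es0 ++ e :: es1)].
Proof.
move=> He; have [vs0 [es0 [vs1 [es1 [H1 H2 H3 H4]]]]] := thru He.
exists vs0, es0, vs1, es1; split => //; apply: walk_dpath.
  by rewrite dwalk_cat ?H1 /= ?H2 ?He ?H3 //; exact: dwalk_size H1.
by rewrite last_cat H2 /= H4.
Qed.

End Flows.

Section Pot.
Variables (R : realFieldType) (N E : finType) (src tgt : E -> N) (L : E -> R).
Hypothesis HL : forall e, 0 < L e.

Lemma walk_len (Q : E -> R) (p : N -> R) x vs es :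
  (forall e x y, dlink src tgt Q e x y -> p x - p y = L e) ->
  dwalk src tgt Q x vs es -> p x - p (last x vs) = plen L es.
Proof.
move=> Hp; elim: vs x es => [|v vs IH] x [|e es] //=.
  by rewrite subrr /plen big_nil.
move=> /andP[He Hw]; rewrite /plen big_cons -/(plen L es) -(IH _ _ Hw) -(Hp _ _ _ He).
ring.
Qed.

Lemma plen_ge0 es : 0 <= plen L es.
Proof. by apply: sumr_ge0 => e _; apply: ltW. Qed.

Lemma plen_pos es : es != [::] -> 0 < plen L es.
Proof.
case: es => // e es _; rewrite /plen big_cons -/(plen L es).
have := plen_ge0 es; have := HL e; lra.
Qed.

Definition cS (S : {set N}) (e : E) : R := (src e \in S)%:R - (tgt e \in S)%:R.

Lemma sum_part (f : E -> N) (F : E -> R) (S : {set N}) :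
  \sum_(v in S) \sum_(e | f e == v) F e = \sum_e F e * (f e \in S)%:R.
Proof.
transitivity (\sum_(e | f e \in S) F e).
  symmetry; rewrite (partition_big f (fun v => v \in S)) //=.
  apply: eq_bigr => v Hv; apply: eq_bigl => e.
  by case: eqP => [->|]; rewrite ?Hv ?andbF.
rewrite big_mkcond; apply: eq_bigr => e _; case: (f e \in S); by rewrite ?mulr1 ?mulr0.
Qed.

Lemma flow_cut (Q : E -> R) s0 s1 (S : {set N}) : st_flow src tgt s0 s1 Q ->
  \sum_e Q e * cS S e = \sum_(v in S) bvec R s0 s1 v.
Proof.
move=> Hf; rewrite -(eq_bigr _ (fun v _ => Hf v)) sumrB !sum_part -sumrB.
by apply: eq_bigr => e _; rewrite /cS mulrBr.
Qed.

Lemma bsum s0 s1 (S : {set N}) : s0 \in S -> s1 \notin S ->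
  \sum_(v in S) bvec R s0 s1 v = 1.
Proof.
move=> H0 H1; rewrite (bigD1 s0) //= big1 ?addr0 /bvec ?eqxx // => v /andP[Hv Hv0].
rewrite (negbTE Hv0); case: eqP => // Hv1; subst v; by rewrite Hv in H1.
Qed.

Lemma cut_abs (D Q : E -> R) (S : {set N}) : (forall e, D e = `|Q e|) ->
  cut src tgt D S = \sum_e `|Q e * cS S e|.
Proof.
move=> HD; rewrite /cut big_mkcond; apply: eq_bigr => e _; rewrite /cS HD.
case: (src e \in S); case: (tgt e \in S) => /=;
  by rewrite ?subrr ?mulr0 ?normr0 ?subr0 ?mulr1 // sub0r mulrN1 normrN.
Qed.



Section Eqm.
Variables s0 s1 : N.
Hypothesis Hs : s0 != s1.
Variables (D : E -> R) (p : N -> R).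
Hypothesis Heq : potential_eqs src tgt L s0 s1 D p.
Hypothesis HD : forall e, D e = `|elec_flow src tgt L D p e|.
Local Notation Q := (elec_flow src tgt L D p).

Lemma eqm_flow : st_flow src tgt s0 s1 Q.
Proof.
move=> v; rewrite -(Heq v) -sumrN; congr (_ + _); apply: eq_bigr => e /eqP <-;
  rewrite /elec_flow; ring.
Qed.

Lemma eqm_core e : Q e != 0 ->
  (0 < Q e -> p (src e) - p (tgt e) = L e) /\
  (Q e < 0 -> p (src e) - p (tgt e) = - L e).
Proof.
move=> Hq.
have HqL : Q e * L e = `|Q e| * (p (src e) - p (tgt e)).
  by rewrite -HD /elec_flow; field; rewrite gt_eqF // HL.
split => Hs'.
  rewrite gtr0_norm // in HqL; by apply: (mulfI Hq); rewrite HqL.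
rewrite ltr0_norm // in HqL; apply: (mulfI Hq); rewrite mulrN HqL; ring.
Qed.

Lemma eqm_drop e x y : dlink src tgt Q e x y -> p x - p y = L e.
Proof.
move=> /andP[Hq]; have [H1 H2] := eqm_core Hq.
case: ifP => Hpos /andP[/eqP<- /eqP<-]; first exact: H1.
have Hneg : Q e < 0 by rewrite lt_neqAle Hq leNgt Hpos.
have := H2 Hneg; lra.
Qed.

Lemma eqm_sign e : 0 <= Q e * (p (src e) - p (tgt e)) /\ (Q e != 0 -> 0 < Q e * (p (src e) - p (tgt e))).
Proof.
case: (eqVneq (Q e) 0) => [->|Hq]; first by rewrite mul0r lexx.
have [H1 H2] := eqm_core Hq; have HLe := HL e.
suff h : 0 < Q e * (p (src e) - p (tgt e)) by split => //; apply: ltW.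
case: (ltgtP (Q e) 0) => H.
- rewrite H2 //; nra.
- rewrite H1 //; nra.
- by move: Hq; rewrite H eqxx.
Qed.

Lemma eqm_a : cut src tgt D [set s0] = 1 /\
  forall S : {set N}, s0 \in S -> s1 \notin S ->
    cut src tgt D [set s0] <= cut src tgt D S.
Proof.
pose U := [set v | p s0 < p v].
have HF := eqm_flow.
have HU : forall e, Q e * cS U e = 0.
  have Hge : forall e, 0 <= Q e * cS U e.
    move=> e; have [Hs1 _] := eqm_sign e; rewrite /cS !inE.
    case: (boolP (p s0 < p (src e))) => Ha; case: (boolP (p s0 < p (tgt e))) => Hb;
      rewrite /= ?mulr0n ?mulr1n ?subrr ?mulr0 //;
      rewrite ?(negbTE Ha) ?(negbTE Hb) -?leNgt in Ha Hb; nra.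
  have Hsum : \sum_e Q e * cS U e = 0.
    apply/eqP; rewrite eq_le sumr_ge0 ?andbT; last by move=> e _; apply: Hge.
    rewrite (flow_cut U HF); apply: sumr_le0 => v; rewrite inE /bvec => Hv.
    case: eqP => [Hv0|_]; first by move: Hv; rewrite Hv0 ltxx.
    case: eqP => _; lra.
  by move=> e; apply: (psumr_eq0P (fun e _ => Hge e) Hsum).
have Hs0 : forall e, 0 <= Q e * cS [set s0] e.
  move=> e; have [_ Hs2] := eqm_sign e; have := HU e; rewrite /cS !inE.
  case: (eqVneq (src e) s0) => Ha; case: (eqVneq (tgt e) s0) => Hb;
    rewrite /= ?mulr0n ?mulr1n ?subrr ?mulr0 ?lexx //.
  - move=> HU'; rewrite subr0 mulr1 leNgt; apply/negP => Hneg.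
    have := Hs2 (negbT (lt_eqF Hneg)); rewrite Ha => Hpos.
    have Ht : p s0 < p (tgt e) by nra.
    move: HU'; rewrite Ha ltxx Ht /= mulr1n ?mulr0n => H; lra.
  - move=> HU'; rewrite sub0r mulrN1 oppr_ge0 leNgt; apply/negP => Hpos0.
    have := Hs2 (negbT (gt_eqF Hpos0)); rewrite Hb => Hpos.
    have Ht : p s0 < p (src e) by nra.
    by move: HU'; rewrite Hb ltxx Ht /= mulr1n subr0 mulr1 => H; move: Hpos0; rewrite H ltxx.
have Hcut0 : cut src tgt D [set s0] = 1.
  rewrite (cut_abs _ HD) (eq_bigr (fun e => Q e * cS [set s0] e)); last first.
    by move=> e _; rewrite ger0_norm.
  by rewrite (flow_cut _ HF) bsum ?inE ?eqxx // eq_sym.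
split => // S HS0 HS1; rewrite Hcut0 (cut_abs _ HD).
by apply: le_trans (ler_norm_sum _ _ _); rewrite (flow_cut _ HF) bsum // normr1.
Qed.

End Eqm.
End Pot.

Section PartB.
Variables (R : realFieldType) (N E : finType) (src tgt : E -> N) (L : E -> R).
Hypothesis HL : forall e, 0 < L e.
Variables s0 s1 : N.
Hypothesis Hs : s0 != s1.

Lemma eqm_acyclic D p : (forall e, D e = `|elec_flow src tgt L D p e|) ->
  acyclic_flow src tgt (elec_flow src tgt L D p).
Proof.
move=> HD x vs es Hw Hl.
have := walk_len (eqm_drop HL HD) Hw; rewrite Hl subrr => H.
apply/eqP; apply: contraT => Hne; have := plen_pos HL Hne; by rewrite -H ltxx.
Qed.

Lemma dpath_len (Q : E -> R) p vs es :
  (forall e x y, dlink src tgt Q e x y -> p x - p y = L e) ->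
  dpath src tgt s0 s1 Q vs es -> plen L es = p s0 - p s1.
Proof.
by move=> Hp /and3P[H1 /eqP H2 _]; rewrite -(walk_len Hp H1) H2.
Qed.

Lemma b_forward D : equilibrium src tgt L s0 s1 D ->
  exists Q : E -> R,
        [/\ st_flow src tgt s0 s1 Q,
            acyclic_flow src tgt Q,
            (forall e, D e = `|Q e|) &
            (forall vs1 es1 vs2 es2,
               dpath src tgt s0 s1 Q vs1 es1 -> dpath src tgt s0 s1 Q vs2 es2 ->
               plen L es1 = plen L es2)].
Proof.
case=> p [Heq HD]; exists (elec_flow src tgt L D p); split => //.
- exact: eqm_flow Heq.
- exact: eqm_acyclic.
- move=> vs1 es1 vs2 es2 H1 H2.
  by rewrite (dpath_len (eqm_drop HL HD) H1) (dpath_len (eqm_drop HL HD) H2).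
Qed.

Definition cwalk (Q : E -> R) (x : N) : seq N * seq E :=
  epsilon (inhabits ([::], [::]))
    (fun w => is_true (dwalk src tgt Q x w.1 w.2 && (last x w.1 == s1))).

Lemma cwalk_spec Q x vs es : dwalk src tgt Q x vs es -> last x vs = s1 ->
  dwalk src tgt Q x (cwalk Q x).1 (cwalk Q x).2 /\ last x (cwalk Q x).1 = s1.
Proof.
move=> Hw Hl.
have : is_true (dwalk src tgt Q x (cwalk Q x).1 (cwalk Q x).2 && (last x (cwalk Q x).1 == s1)).
  apply: (@epsilon_spec _ (inhabits ([::], [::]))
    (fun w => is_true (dwalk src tgt Q x w.1 w.2 && (last x w.1 == s1)))).
  by exists (vs, es); rewrite /= Hw Hl eqxx.
by case/andP => H1 /eqP H2.
Qed.

Lemma b_backward D (Q : E -> R) :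
  st_flow src tgt s0 s1 Q -> acyclic_flow src tgt Q -> (forall e, D e = `|Q e|) ->
  (forall vs1 es1 vs2 es2,
     dpath src tgt s0 s1 Q vs1 es1 -> dpath src tgt s0 s1 Q vs2 es2 ->
     plen L es1 = plen L es2) ->
  equilibrium src tgt L s0 s1 D.
Proof.
move=> Hf Hac HD Hleq.
pose pot x := plen L (cwalk Q x).2.
have Hdrop : forall e x y, dlink src tgt Q e x y -> pot x - pot y = L e.
  move=> e x y He.
  have [vs0 [es0 [vs1 [es1 [H1 H2 H3 H4 _]]]]] := thru_dpath Hs Hf Hac He.
  have [Hx1 Hx2] : dwalk src tgt Q x (cwalk Q x).1 (cwalk Q x).2 /\
                   last x (cwalk Q x).1 = s1.
    by apply: (@cwalk_spec _ _ (y :: vs1) (e :: es1)); rewrite /= ?He ?H3.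
  have [Hy1 Hy2] := cwalk_spec H3 H4.
  have Hsz := dwalk_size H1.
  have D1 : dpath src tgt s0 s1 Q (vs0 ++ (cwalk Q x).1) (es0 ++ (cwalk Q x).2).
    apply: (walk_dpath Hac); first by rewrite dwalk_cat // H1 H2 Hx1.
    by rewrite last_cat H2.
  have D2 : dpath src tgt s0 s1 Q (vs0 ++ y :: (cwalk Q y).1)
                                (es0 ++ e :: (cwalk Q y).2).
    apply: (walk_dpath Hac); first by rewrite dwalk_cat // H1 H2 /= He Hy1.
    by rewrite last_cat H2.
  have := Hleq _ _ _ _ D1 D2; rewrite /plen !big_cat big_cons /= /pot /plen.
  lra.
have T : forall e, (pot (src e) - pot (tgt e)) * (D e / L e) = Q e.
  move=> e; have HLe := HL e; rewrite HD; case: (ltgtP (Q e) 0) => H.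
  - have Hd : dlink src tgt Q e (tgt e) (src e).
      by rewrite /dlink lt_eqF // ltNge (ltW H) /= !eqxx.
    have := Hdrop _ _ _ Hd => Hd'.
    rewrite ltr0_norm // (_ : pot (src e) - pot (tgt e) = - L e); last by lra.
    field; by rewrite gt_eqF.
  - have Hd : dlink src tgt Q e (src e) (tgt e).
      by rewrite /dlink gt_eqF // H /= !eqxx.
    rewrite gtr0_norm // (Hdrop _ _ _ Hd); field; by rewrite gt_eqF.
  - by rewrite H normr0 mul0r mulr0.
exists pot; split.
  move=> v; rewrite -(Hf v) -sumrN; congr (_ + _); apply: eq_bigr => e /eqP <-.
    by rewrite T.
  by rewrite -T; ring.
move=> e; rewrite /elec_flow (_ : D e * _ / _ = Q e) -?HD //.
by rewrite -T; ring.
Qed.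

End PartB.

Section PartC.
Variables (R : realFieldType) (N E : finType) (src tgt : E -> N) (L : E -> R).
Hypothesis HL : forall e, 0 < L e.
Variables s0 s1 : N.
Hypothesis Hs : s0 != s1.

Definition crosses (S : {set N}) (f : E) := (src f \in S) != (tgt f \in S).

Lemma dlink_crosses (Q : E -> R) S f a b : dlink src tgt Q f a b ->
  crosses S f = ((a \in S) != (b \in S)).
Proof.
rewrite /crosses /dlink => /andP[_]; case: ifP => _ /andP[/eqP-> /eqP->] //.
by rewrite eq_sym.
Qed.

Lemma walk_cross (Q : E -> R) (p : N -> R) t z vs es :
  (forall e x y, dlink src tgt Q e x y -> p x - p y = L e) ->
  dwalk src tgt Q z vs es ->
  (z \notin [set v | t <= p v] -> forall f, f \in es -> ~~ crosses [set v | t <= p v] f) /\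
  (z \in [set v | t <= p v] -> forall f1 f2, f1 \in es -> f2 \in es ->
     crosses [set v | t <= p v] f1 -> crosses [set v | t <= p v] f2 -> f1 = f2).
Proof.
move=> Hp; set S := [set v | t <= p v].
elim: vs z es => [|v vs IH] z [|f es] //= /andP[Hf Hw].
have Hpv : p v < p z by have := Hp _ _ _ Hf; have := HL f; lra.
have [IH1 IH2] := IH v es Hw.
have Hcf := dlink_crosses S Hf.
split.
  move=> Hz; have Hv : v \notin S.
    move: Hz; rewrite !inE -!ltNge => Hz; lra.
  move=> g; rewrite in_cons => /orP[/eqP->|Hg]; last exact: IH1.
  by rewrite Hcf (negbTE Hz) (negbTE Hv).
move=> Hz; case: (boolP (v \in S)) => Hv.
  have Hnf : ~~ crosses S f by rewrite Hcf Hz Hv.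
  move=> g1 g2; rewrite !in_cons => /orP[/eqP->|H1]; first by rewrite (negbTE Hnf).
  move=> /orP[/eqP->|H2]; first by move=> _; rewrite (negbTE Hnf).
  exact: IH2.
move=> g1 g2; rewrite !in_cons => /orP[/eqP->|H1] /orP[/eqP->|H2] //.
- by move=> _ Hc; move: (IH1 Hv _ H2); rewrite Hc.
- by move=> Hc; move: (IH1 Hv _ H1); rewrite Hc.
- by move=> Hc; move: (IH1 Hv _ H1); rewrite Hc.
Qed.

Lemma dpath_upath (Q : E -> R) vs es : dpath src tgt s0 s1 Q vs es -> upath src tgt s0 s1 vs es.
Proof. by case/and3P => H1 H2 H3; rewrite /upath (dwalk_uwalk H1) H2 H3. Qed.

Lemma exists_dlink (Q : E -> R) e : Q e != 0 -> exists x y, dlink src tgt Q e x y.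
Proof.
move=> Hq; case: (boolP (0 < Q e)) => H.
  by exists (src e), (tgt e); rewrite /dlink Hq H /= !eqxx.
by exists (tgt e), (src e); rewrite /dlink Hq (negbTE H) /= !eqxx.
Qed.

Lemma c_forward D :
  (forall vs1 es1 vs2 es2,
      upath src tgt s0 s1 vs1 es1 -> upath src tgt s0 s1 vs2 es2 ->
      es1 != es2 -> plen L es1 != plen L es2) ->
  equilibrium src tgt L s0 s1 D ->
  exists vs es, upath src tgt s0 s1 vs es /\
        forall e, D e = if e \in es then 1 else 0.
Proof.
move=> Hdist [p [Heq HD]].
set Q := elec_flow src tgt L D p in HD *.
have HF : st_flow src tgt s0 s1 Q := eqm_flow Heq.
have Hac : acyclic_flow src tgt Q := eqm_acyclic HL HD.
have Hdrop := eqm_drop HL HD.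
have [e0 [u Hu]] := source_out HF.
have [vs0 [es0 [vs1 [es1 [_ _ _ _ HP]]]]] := thru_dpath Hs HF Hac Hu.
set vsP := vs0 ++ u :: vs1 in HP; set esP := es0 ++ e0 :: es1 in HP.
have Huniq : forall vs es, dpath src tgt s0 s1 Q vs es -> es = esP.
  move=> vs es Hd; apply/eqP; apply: contraT => Hne.
  have := Hdist _ _ _ _ (dpath_upath Hd) (dpath_upath HP) Hne.
  by rewrite (dpath_len Hdrop Hd) (dpath_len Hdrop HP) eqxx.
have Hin : forall f, Q f != 0 -> f \in esP.
  move=> f Hq; have [x [y He]] := exists_dlink Hq.
  have [ws0 [fs0 [ws1 [fs1 [_ _ _ _ Hd]]]]] := thru_dpath Hs HF Hac He.
  by rewrite -(Huniq _ _ Hd) mem_cat mem_head orbT.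
have HPw : dwalk src tgt Q s0 vsP esP by case/and3P: HP.
exists vsP, esP; split; first exact: dpath_upath HP.
move=> e; rewrite HD; case: (eqVneq (Q e) 0) => Hq.
  rewrite Hq normr0; case: ifP => // HinP.
  have [a [b Hab]] := dwalk_in HPw HinP.
  by move: Hab; rewrite /dlink Hq eqxx.
rewrite (Hin _ Hq).
have [x [y He]] := exists_dlink Hq.
have [ws0 [fs0 [ws1 [fs1 [H1 H2 H3 H4 _]]]]] := thru_dpath Hs HF Hac He.
pose S := [set v | p x <= p v].
have Hxy := Hdrop _ _ _ He; have HLe := HL e.
have HS0 : s0 \in S.
  rewrite inE; have := walk_len Hdrop H1; rewrite H2; have := plen_ge0 HL fs0; lra.
have HS1 : s1 \notin S.
  rewrite inE -ltNge; have := walk_len Hdrop H3; rewrite H4; have := plen_ge0 HL fs1; lra.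
have Hce : crosses S e.
  rewrite (dlink_crosses S He) !inE lexx /= -ltNge; lra.
have [_ Hcr] := walk_cross (p x) Hdrop HPw.
have Hother : forall f, f != e -> Q f * cS R src tgt S f = 0.
  move=> f Hfe; case: (eqVneq (Q f) 0) => Hqf; first by rewrite Hqf mul0r.
  case: (boolP (crosses S f)) => Hcf.
    by move: Hfe; rewrite (Hcr HS0 f e (Hin _ Hqf) (Hin _ Hq) Hcf Hce) eqxx.
  move: Hcf; rewrite /crosses /cS.
  by case: (src f \in S); case: (tgt f \in S) => //= _; rewrite subrr mulr0.
have Hsum : Q e * cS R src tgt S e = 1.
  rewrite -(bsum R HS0 HS1) -(flow_cut S HF) (bigD1 e) //= big1 ?addr0 //.
have Hc1 : `|cS R src tgt S e| = 1.
  move: Hce; rewrite /crosses /cS.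
  by case: (src e \in S); case: (tgt e \in S) => //= _; rewrite ?subr0 ?sub0r ?normrN normr1.
by rewrite -[LHS]mulr1 -Hc1 -normrM Hsum normr1.
Qed.


End PartC.

Section PartC2.
Variables (R : realFieldType) (N E : finType) (src tgt : E -> N) (L : E -> R).
Hypothesis HL : forall e, 0 < L e.

Fixpoint potl (x : N) (vs : seq N) (es : seq E) : N -> R :=
  match vs, es with
  | v :: vs', e :: es' => fun u => if u == x then L e + potl v vs' es' v
                                   else potl v vs' es' u
  | _, _ => fun _ => 0
  end.

Fixpoint good (p : N -> R) (x : N) (vs : seq N) (es : seq E) : Prop :=
  match vs, es with
  | v :: vs', e :: es' => p x - p v = L e /\ good p v vs' es'
  | _, _ => True
  end.

Definition Gf (D : E -> R) (p : N -> R) (v : N) : R :=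
  \sum_(e | src e == v) (p v - p (tgt e)) * (D e / L e)
  + \sum_(e | tgt e == v) (p v - p (src e)) * (D e / L e).

Definition ind (es : seq E) (e : E) : R := if e \in es then 1 else 0.

Lemma good_ext p q x vs es : (forall u, u \in x :: vs -> p u = q u) ->
  good p x vs es -> good q x vs es.
Proof.
elim: vs x es => [|v vs IH] x [|e es] //= Hpq [H1 H2]; split.
  by rewrite -!Hpq ?mem_head // in_cons mem_head orbT.
by apply: IH H2 => u Hu; apply: Hpq; rewrite in_cons Hu orbT.
Qed.

Lemma potl_good x vs es : uniq (x :: vs) -> good (potl x vs es) x vs es.
Proof.
elim: vs x es => [|v vs IH] x [|e es] //= /andP[Hx Hu]; split.
  have Hvx : (v == x) = false.
    by apply/negbTE; move: Hx; rewrite in_cons negb_or eq_sym => /andP[].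
  by rewrite eqxx Hvx; ring.
apply: good_ext (IH v es Hu) => u Hu'.
case: eqP => // Hux; by move: Hx; rewrite -Hux Hu'.
Qed.

Lemma uwalk_ends x vs es f : uwalk src tgt x vs es -> f \in es ->
  (src f \in x :: vs) && (tgt f \in x :: vs).
Proof.
elim: vs x es => [|v vs IH] x [|g es] //= /andP[Hl Hw].
rewrite in_cons => /orP[/eqP->|Hf].
  move: Hl; rewrite /links => /orP[/andP[/eqP-> /eqP->]|/andP[/eqP-> /eqP->]];
  by rewrite !in_cons !eqxx !orbT.
have /andP[A B] := IH _ _ Hw Hf.
by apply/andP; split; rewrite in_cons ?A ?B orbT.
Qed.

Lemma sum_delta (P : pred E) (F : E -> R) e :
  \sum_(f | P f) F f * (f == e)%:R = if P e then F e else 0.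
Proof.
case: (boolP (P e)) => He.
  rewrite (bigD1 e) //= eqxx mulr1n mulr1 big1 ?addr0 // => f /andP[_ /negbTE->].
  by rewrite mulr0n mulr0.
rewrite big1 // => f Hf; case: (eqVneq f e) => [Hfe|Hfe].
  by subst; rewrite Hf in He.
by rewrite mulr0n mulr0.
Qed.

Lemma Gf_ext D1 D2 p u : (forall f, D1 f = D2 f) -> Gf D1 p u = Gf D2 p u.
Proof. by move=> H; rewrite /Gf; congr (_ + _); apply: eq_bigr => f _; rewrite H. Qed.

Lemma Gf_add D1 D2 p v : Gf (fun f => D1 f + D2 f) p v = Gf D1 p v + Gf D2 p v.
Proof.
rewrite /Gf.
rewrite (eq_bigr (fun e => (p v - p (tgt e)) * (D1 e / L e) + (p v - p (tgt e)) * (D2 e / L e)));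
  last by move=> e _; ring.
rewrite [X in _ + X = _](eq_bigr (fun e => (p v - p (src e)) * (D1 e / L e) + (p v - p (src e)) * (D2 e / L e)));
  last by move=> e _; ring.
rewrite !big_split /=; ring.
Qed.

Lemma Gf_delta p e x v u : links src tgt e x v -> x != v -> p x - p v = L e ->
  Gf (fun f => (f == e)%:R) p u = (u == x)%:R - (u == v)%:R.
Proof.
move=> Hl Hxv Hd; rewrite /Gf.
rewrite (eq_bigr (fun f => ((p u - p (tgt f)) / L f) * (f == e)%:R));
  last by move=> f _; ring.
rewrite [X in _ + X = _](eq_bigr (fun f => ((p u - p (src f)) / L f) * (f == e)%:R));
  last by move=> f _; ring.
rewrite !sum_delta; have HLe := HL e; have HL0 : L e != 0 by rewrite gt_eqF.
have Hpx : p x = L e + p v by lra.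
have Hvx : (v == x) = false by apply/negbTE; rewrite eq_sym.
have Hxv' : (x == v) = false by apply/negbTE.
move: Hl; rewrite /links => /orP[/andP[/eqP-> /eqP->]|/andP[/eqP-> /eqP->]];
  (case: (eqVneq u x) => [->|Hux]; [|case: (eqVneq u v) => [->|Huv]]);
  rewrite ?eqxx ?Hvx ?Hxv' /=;
  try (rewrite (_ : (x == u) = false); last by rewrite eq_sym (negbTE Hux));
  try (rewrite (_ : (v == u) = false); last by rewrite eq_sym (negbTE Huv));
  try (rewrite (negbTE Hux)); try (rewrite (negbTE Huv));
  rewrite /= ?mulr1n ?mulr0n ?Hpx; field; by rewrite ?HL0.
Qed.

Lemma G_walk p x vs es : uwalk src tgt x vs es -> uniq (x :: vs) -> good p x vs es ->
  forall u, Gf (ind es) p u = (u == x)%:R - (u == last x vs)%:R.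
Proof.
elim: vs x es => [|v vs IH] x [|e es] //=.
  move=> _ _ _ u; rewrite subrr /Gf /ind !big1 ?addr0 // => f _;
  by rewrite in_nil mul0r mulr0.
move=> /andP[Hl Hw] /andP[Hx Hu] [Hd Hg] u.
have Hne : e \notin es.
  apply/negP => He; have /andP[A B] := uwalk_ends Hw He.
  move: Hl; rewrite /links => /orP[/andP[/eqP Hs' _]|/andP[_ /eqP Ht']].
    by rewrite -Hs' A in Hx.
  by rewrite -Ht' B in Hx.
have Hxv : x != v by move: Hx; rewrite in_cons negb_or => /andP[].
rewrite (@Gf_ext _ (fun f => (f == e)%:R + ind es f)); last first.
  move=> f; rewrite /ind in_cons; case: (eqVneq f e) => [->|Hfe] /=.
    by rewrite (negbTE Hne) mulr1n addr0.
  by rewrite mulr0n add0r.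
rewrite Gf_add (Gf_delta _ Hl Hxv Hd) (IH v es Hw Hu Hg u); ring.
Qed.

Lemma good_edge p x vs es f : uwalk src tgt x vs es -> good p x vs es -> f \in es ->
  `|p (src f) - p (tgt f)| = L f.
Proof.
elim: vs x es => [|v vs IH] x [|e es] //= /andP[Hl Hw] [Hd Hg].
rewrite in_cons => /orP[/eqP->|Hf]; last exact: IH Hw Hg Hf.
move: Hl; rewrite /links => /orP[/andP[/eqP-> /eqP->]|/andP[/eqP-> /eqP->]].
  by rewrite Hd gtr0_norm.
by rewrite -opprB normrN Hd gtr0_norm.
Qed.

Lemma c_backward s0 s1 (Hs : s0 != s1) D vs es :
  upath src tgt s0 s1 vs es -> (forall e, D e = if e \in es then 1 else 0) ->
  equilibrium src tgt L s0 s1 D.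
Proof.
case/and3P => Hw /eqP Hl Hu HD.
have Hg := potl_good es Hu.
exists (potl s0 vs es); split.
  move=> v; change (Gf D (potl s0 vs es) v = bvec R s0 s1 v).
  rewrite (@Gf_ext _ (ind es)) // (G_walk Hw Hu Hg) Hl /bvec.
  case: (eqVneq v s0) => [->|H0]; first by rewrite (negbTE Hs) mulr0n subr0.
  case: (eqVneq v s1) => [Hv1|H1]; first by rewrite /= mulr0n mulr1n sub0r.
  by rewrite /= mulr0n subrr.
move=> e; rewrite /elec_flow HD; case: ifP => He; last by rewrite !mul0r normr0.
rewrite mul1r normrM normfV (good_edge Hw Hg He) (gtr0_norm (HL e)) divff //.
by rewrite gt_eqF.
Qed.

End PartC2.


Theorem mainTheorem3 (R : realFieldType) (N E : finType) (src tgt : E -> N)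
    (L : E -> R) (s0 s1 : N)
    (Hs : s0 != s1)
    (Hloop : forall e, src e != tgt e)
    (Hconn : connected_graph src tgt)
    (HL : forall e, 0 < L e) :
  (* (a) *)
  (forall D : E -> R, equilibrium src tgt L s0 s1 D ->
     cut src tgt D [set s0] = 1 /\
     (forall S : {set N}, s0 \in S -> s1 \notin S ->
        cut src tgt D [set s0] <= cut src tgt D S)) /\
  (* (b) *)
  (forall D : E -> R, (forall e, 0 <= D e) ->
     (equilibrium src tgt L s0 s1 D <->
      exists Q : E -> R,
        [/\ st_flow src tgt s0 s1 Q,
            acyclic_flow src tgt Q,
            (forall e, D e = `|Q e|) &
            (forall vs1 es1 vs2 es2,
               dpath src tgt s0 s1 Q vs1 es1 -> dpath src tgt s0 s1 Q vs2 es2 ->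
               plen L es1 = plen L es2)])) /\
  (* (b), "in particular" *)
  ((forall vs1 es1 vs2 es2,
      upath src tgt s0 s1 vs1 es1 -> upath src tgt s0 s1 vs2 es2 ->
      es1 != es2 -> plen L es1 != plen L es2) ->
   forall D : E -> R, (forall e, 0 <= D e) ->
     (equilibrium src tgt L s0 s1 D <->
      exists vs es, upath src tgt s0 s1 vs es /\
        forall e, D e = if e \in es then 1 else 0)).
Proof.
split.
  move=> D [p [Heq HD]]; by move: (eqm_a HL Hs Heq HD).
split.
  move=> D HD0; split; first by move=> H; move: (b_forward HL H).
  by case=> Q [H1 H2 H3 H4]; move: (b_backward HL Hs H1 H2 H3 H4).
move=> Hdist D HD0; split; first by move=> H; move: (c_forward HL Hs Hdist H).
by case=> vs [es [H1 H2]]; move: (c_backward HL Hs H1 H2).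
Qed.
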